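(* Let $R$ be a commutative ring and $E$ a set of $w\ge3$ distinct non-trivial idempotents of $R$ such that $eR$ is a maximal ideal of $R$ for every $e\in E$. Let $x=f_1f_2\cdots f_k$ and $y=b_1b_2\cdots b_j$ with $f_1,\dots,f_k,b_1,\dots,b_j\in E$ and $2\le k,j<w$. Then (1) $x\ne0$; (2) $x=y$ if and only if $\{f_1,\dots,f_k\}=\{b_1,\dots,b_j\}$.
   Context: Rings have $1\ne0$. An idempotent $e$ ($e^2=e$) is non-trivial if $e\ne0,1$. *)

(* Defs.v *)
From HB Require Import structures.
From mathcomp Require Import all_boot all_order all_algebra.
Set Implicit Arguments. Unset Strict Implicit. Unset Printing Implicit Defensive.
Import GRing.Theory.
Local Open Scope ring_scope.

Definition is_ideal (R : comNzRingType) (I : R -> Prop) : Prop :=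
  [/\ I 0, (forall a b, I a -> I b -> I (a + b)) & (forall r a, I a -> I (r * a))].

Definition maximal_ideal (R : comNzRingType) (I : R -> Prop) : Prop :=
  [/\ is_ideal I, ~ I 1 &
     forall J : R -> Prop, is_ideal J -> (forall a, I a -> J a) ->
       (forall a, J a -> I a) \/ (forall a, J a)].

Definition principal_ideal (R : comNzRingType) (e : R) : R -> Prop :=
  fun a => exists r, a = e * r.

Definition nontriv_idem (R : comNzRingType) (e : R) : Prop :=
  [/\ e * e = e, e <> 0 & e <> 1].

(* Main.v *)
Require Import Defs.
From mathcomp Require Import all_boot all_order all_algebra.
From mathcomp Require Import ring.
Import GRing.Theory.
Local Open Scope ring_scope.

Lemma orth (R : comNzRingType) (e e' : R)
  (ie : nontriv_idem e) (ie' : nontriv_idem e')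
  (me : maximal_ideal (principal_ideal e)) (me' : maximal_ideal (principal_ideal e'))
  (ne : e != e') : (1 - e) * (1 - e') = 0.
Proof.
case: ie => ee e0 e1; case: ie' => ee' e0' e1'.
case: me => Iid notI1 Imax; case: me' => Iid' notI1' Imax'.
pose J := fun a : R => exists r s, a = e * r + e' * s.
have hJ : is_ideal J.
  split; first by exists 0, 0; rewrite !mulr0 addr0.
  - move=> a c [r [s ->]] [r' [s' ->]]; exists (r + r'), (s + s'); ring.
  - move=> t a [r [s ->]]; exists (t * r), (t * s); ring.
have sub : forall a, principal_ideal e a -> J a.
  by move=> a [r ->]; exists r, 0; rewrite mulr0 addr0.
case: (Imax J hJ sub) => [HJ|HJ].
  have [r hr] : principal_ideal e e' by apply: HJ; exists 0, 1; rewrite mulr0 mulr1 add0r.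
  have sub' : forall a, principal_ideal e' a -> principal_ideal e a.
    by move=> a [t ->]; exists (r * t); rewrite hr mulrA.
  case: (Imax' _ Iid sub') => [H|H]; last first.
    by exfalso; apply: notI1; apply: H; exists 1; rewrite mulr1.
  have [s hs] : principal_ideal e' e by apply: H; exists 1; rewrite mulr1.
  have h1 : e * e' = e' by rewrite hr mulrA ee.
  have h2 : e' * e = e by rewrite hs mulrA ee'.
  have heq : e = e' by rewrite -h2 mulrC h1.
  by rewrite heq eqxx in ne.
have [r [s hrs]] := HJ 1.
have -> : (1 - e) * (1 - e') = (1 - e) * (1 - e') * (e * r + e' * s)
  by rewrite -hrs mulr1.
have -> : (1 - e) * (1 - e') * (e * r + e' * s)
   = (e - e * e) * ((1 - e') * r) + (e' - e' * e') * ((1 - e) * s) by ring.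
by rewrite ee ee' !subrr !mul0r addr0.
Qed.

Lemma prod_undup (R : comNzRingType) (s : seq R) :
  (forall e, e \in s -> e * e = e) ->
  \prod_(e <- s) e = \prod_(e <- undup s) e.
Proof.
elim: s => [|x s IH] hs //=.
have hs' : forall e, e \in s -> e * e = e by move=> e he; apply: hs; rewrite inE he orbT.
case: ifP => xs.
  rewrite -IH // big_cons (big_rem x xs) /= mulrA hs ?mem_head //.
by rewrite !big_cons IH.
Qed.

Lemma prod_codom (R : comNzRingType) k (f : 'I_k -> R) :
  \prod_(i < k) f i = \prod_(e <- codom f) e.
Proof. by rewrite /codom /image_mem big_map big_enum. Qed.

Theorem lemma3p20 (R : comNzRingType) (E : seq R)
  (hE_uniq : uniq E) (hw : (3 <= size E)%N)
  (hE_idem : forall e, e \in E -> nontriv_idem e)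
  (hE_max : forall e, e \in E -> maximal_ideal (principal_ideal e))
  (k j : nat) (f : 'I_k -> R) (b : 'I_j -> R)
  (hf : forall i, f i \in E) (hb : forall i, b i \in E)
  (hk : (2 <= k < size E)%N) (hj : (2 <= j < size E)%N) :
  (\prod_(i < k) f i != 0) /\
  (\prod_(i < k) f i = \prod_(i < j) b i <-> codom f =i codom b).
Proof.
have key_in : forall n (h : 'I_n -> R), (forall i, h i \in E) ->
    forall g, g \in E -> g \in codom h -> (1 - g) * \prod_(i < n) h i = 0.
  move=> n h hh g gE /codomP [i0 ->].
  rewrite (bigD1 i0) //= mulrA mulrBl mul1r.
  by case: (hE_idem _ (hh i0)) => -> _ _; rewrite subrr mul0r.
have key_out : forall n (h : 'I_n -> R), (forall i, h i \in E) ->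
    forall g, g \in E -> g \notin codom h -> (1 - g) * \prod_(i < n) h i = 1 - g.
  move=> n h hh g gE gn.
  apply: (big_rec (fun x => (1 - g) * x = 1 - g)); first by rewrite mulr1.
  move=> i x _ Hx.
  have ne : g != h i by apply: contra gn => /eqP ->; apply: codom_f.
  have := @orth _ _ _ (hE_idem _ gE) (hE_idem _ (hh i)) (hE_max _ gE) (hE_max _ (hh i)) ne.
  rewrite mulrBr mulr1 => /eqP; rewrite subr_eq0 => /eqP hg.
  by rewrite mulrA -hg Hx.
have g1 : forall g, g \in E -> 1 - g != 0.
  by move=> g gE; rewrite subr_eq0 eq_sym; case: (hE_idem _ gE) => _ _ /eqP.
split.
  have /allPn [g gE gn] : ~~ all (fun e => e \in codom f) E.
    apply/negP => /allP hs.
    have := uniq_leq_size hE_uniq hs; rewrite size_codom card_ord.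
    by case/andP: hk => _ hk' hle; move: (leq_trans hk' hle); rewrite ltnn.
  apply/negP => /eqP h0.
  by move: (key_out _ _ hf _ gE gn); rewrite h0 mulr0 => /esym/eqP; rewrite (negPf (g1 _ gE)).
split.
  move=> hxy a.
  have dir : forall n m (h : 'I_n -> R) (h' : 'I_m -> R), (forall i, h i \in E) ->
     (forall i, h' i \in E) -> \prod_(i < n) h i = \prod_(i < m) h' i ->
     a \in codom h -> a \in codom h'.
    move=> n m h h' hh hh' heq ah.
    have aE : a \in E by case/codomP: ah => i ->.
    apply/negPn/negP => an.
    move: (key_out _ _ hh' _ aE an); rewrite -heq key_in //.
    by move/esym/eqP; rewrite (negPf (g1 _ aE)).
  apply/idP/idP; first exact: dir.
  by apply: dir => //; rewrite hxy.
move=> hc.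
have idem : forall n (h : 'I_n -> R), (forall i, h i \in E) ->
   forall e, e \in codom h -> e * e = e.
  by move=> n h hh e /codomP [i ->]; case: (hE_idem _ (hh i)).
rewrite !prod_codom (@prod_undup _ _ (idem _ _ hf)) (@prod_undup _ _ (idem _ _ hb)).
apply: perm_big; apply: uniq_perm; rewrite ?undup_uniq // => e.
by rewrite !mem_undup hc.
Qed.
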